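(* Let $L,M,N$ be Lie superalgebras such that (i) $L$ and $N$ act compatibly on one another, and $M$ and $N$ act compatibly on one another; (ii) ${}^{l}({}^{m}n)=(-1)^{|l||m|}\,{}^{m}({}^{l}n)$ for all homogeneous $l\in L$, $m\in M$, $n\in N$; (iii) the canonical homomorphisms $[L,N]^{N}\otimes M\to N\otimes M$ and $[M,N]^{N}\otimes L\to N\otimes L$ are trivial. Then $L\oplus M$ acts on $N$ by ${}^{(l,m)}n={}^{l}n+{}^{m}n$, $N$ acts on $L\oplus M$ by ${}^{n}(l,m)=({}^{n}l,{}^{n}m)$, and with these actions there is an isomorphism of Lie superalgebras \[(L\oplus M)\otimes N\cong (L\otimes N)\oplus(M\otimes N),\quad (l,m)\otimes n\mapsto (l\otimes n,\,m\otimes n).\]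
   Context: All algebras are over a field $\mathbb{F}$ of characteristic $\neq 2,3$. An action of a Lie superalgebra $P$ on a Lie superalgebra $M$ is an even bilinear map $(p,m)\mapsto {}^{p}m$ with ${}^{[p,p']}m={}^{p}({}^{p'}m)-(-1)^{|p||p'|}{}^{p'}({}^{p}m)$ and ${}^{p}[m,m']=[{}^{p}m,m']+(-1)^{|p||m|}[m,{}^{p}m']$. Actions of $M$ and $N$ on each other are compatible if ${}^{({}^{n}m)}n'=-(-1)^{|m||n|}[{}^{m}n,n']$ and ${}^{({}^{m}n)}m'=-(-1)^{|m||n|}[{}^{n}m,m']$ for all homogeneous $m,m'\in M$, $n,n'\in N$. Given mutual actions, the non-abelian tensor product $M\otimes N$ is the Lie superalgebra generated by symbols $m\otimes n$ (homogeneous $m,n$, degree $|m|+|n|$) subject to: $\lambda(m\otimes n)=\lambda m\otimes n=m\otimes\lambda n$; additivity in each variable (for elements of the same degree); $[m,m']\otimes n=m\otimes{}^{m'}n-(-1)^{|m||m'|}m'\otimes{}^{m}n$; $m\otimes[n,n']=(-1)^{|n'|(|m|+|n|)}{}^{n'}m\otimes n-(-1)^{|m||n|}{}^{n}m\otimes n'$; $[m\otimes n,m'\otimes n']=-(-1)^{|m||n|}\,{}^{n}m\otimes{}^{m'}n'$. For an action of $L$ on $N$, $[L,N]^{N}$ denotes the graded ideal of $N$ spanned by the elements ${}^{l}n$. *)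

(* Defs.v *)
From HB Require Import structures.
From mathcomp Require Import all_boot all_order all_algebra.
Set Implicit Arguments. Unset Strict Implicit. Unset Printing Implicit Defensive.
Import GRing.Theory.
Local Open Scope ring_scope.

(* A (candidate) Lie superalgebra over F: an F-vector space, a predicate
   "homogeneous of parity b" (b = false : even, b = true : odd), and a bracket. *)
Record sLie (F : fieldType) := SLie {
  sl_car :> lmodType F;
  sl_hom : bool -> sl_car -> Prop;
  sl_br : sl_car -> sl_car -> sl_car }.

Arguments sl_hom {F} s b x.
Arguments sl_br {F} s x y.

Section Defs.
Variable F : fieldType.

Definition sgn (a b : bool) : F := if a && b then -1 else 1.

Definition linear_map (U V : lmodType F) (f : U -> V) : Prop :=
  forall (k : F) (x y : U), f (k *: x + y) = k *: f x + f y.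

Definition bilinear_map (U V W : lmodType F) (f : U -> V -> W) : Prop :=
  (forall v, linear_map (fun u => f u v)) /\ (forall u, linear_map (f u)).

Definition is_sLie (A : sLie F) : Prop :=
      (forall b, sl_hom A b 0) /\
      (forall b (k : F) (x y : A), sl_hom A b x -> sl_hom A b y ->
          sl_hom A b (k *: x + y)) /\
      (forall x : A, exists x0 x1, [/\ sl_hom A false x0, sl_hom A true x1
                                    & x = x0 + x1]) /\
      (forall x : A, sl_hom A false x -> sl_hom A true x -> x = 0) /\
      bilinear_map (sl_br A) /\
      (forall a b (x y : A), sl_hom A a x -> sl_hom A b y ->
          sl_hom A (a (+) b) (sl_br A x y)) /\
      (forall a b (x y : A), sl_hom A a x -> sl_hom A b y ->
          sl_br A x y = - (sgn a b *: sl_br A y x)) /\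
      (forall a b c (x y z : A), sl_hom A a x -> sl_hom A b y -> sl_hom A c z ->
          sgn a c *: sl_br A x (sl_br A y z) + sgn b a *: sl_br A y (sl_br A z x)
          + sgn c b *: sl_br A z (sl_br A x y) = 0).

Definition is_sLie_hom (A B : sLie F) (f : A -> B) : Prop :=
  [/\ linear_map f,
      (forall b x, sl_hom A b x -> sl_hom B b (f x))
    & (forall x y, f (sl_br A x y) = sl_br B (f x) (f y))].

Definition is_sLie_iso (A B : sLie F) (f : A -> B) : Prop :=
  is_sLie_hom f /\ bijective f.

Definition is_action (P M : sLie F) (act : P -> M -> M) : Prop :=
  [/\ bilinear_map act,
      (forall a b p m, sl_hom P a p -> sl_hom M b m -> sl_hom M (a (+) b) (act p m)),
      (forall a a' p p' m, sl_hom P a p -> sl_hom P a' p' ->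
          act (sl_br P p p') m = act p (act p' m) - sgn a a' *: act p' (act p m))
    & (forall a b p m m', sl_hom P a p -> sl_hom M b m ->
          act p (sl_br M m m') = sl_br M (act p m) m' + sgn a b *: sl_br M m (act p m'))].

Definition compatible (M N : sLie F) (actMN : M -> N -> N) (actNM : N -> M -> M) : Prop :=
  forall a b (m m' : M) (n n' : N), sl_hom M a m -> sl_hom N b n ->
    actMN (actNM n m) n' = - (sgn a b *: sl_br N (actMN m n) n')
 /\ actNM (actMN m n) m' = - (sgn a b *: sl_br M (actNM n m) m').

(* The defining relations of the non-abelian tensor product, satisfied by a
   map t : M -> N -> T (only its values on homogeneous pairs matter). *)
Definition tensor_rels (M N : sLie F) (actMN : M -> N -> N) (actNM : N -> M -> M)
    (T : sLie F) (t : M -> N -> T) : Prop :=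
      (forall a b m n, sl_hom M a m -> sl_hom N b n -> sl_hom T (a (+) b) (t m n)) /\
      (forall a b (k : F) m n, sl_hom M a m -> sl_hom N b n ->
          t (k *: m) n = k *: t m n /\ t m (k *: n) = k *: t m n) /\
      (forall a b m m' n, sl_hom M a m -> sl_hom M a m' -> sl_hom N b n ->
          t (m + m') n = t m n + t m' n) /\
      (forall a b m n n', sl_hom M a m -> sl_hom N b n -> sl_hom N b n' ->
          t m (n + n') = t m n + t m n') /\
      (forall a a' b m m' n, sl_hom M a m -> sl_hom M a' m' -> sl_hom N b n ->
          t (sl_br M m m') n = t m (actMN m' n) - sgn a a' *: t m' (actMN m n)) /\
      (forall a b c m n n', sl_hom M a m -> sl_hom N b n -> sl_hom N c n' ->
          t m (sl_br N n n') = sgn c (a (+) b) *: t (actNM n' m) n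
                               - sgn a b *: t (actNM n m) n') /\
      (forall a b a' b' m n m' n', sl_hom M a m -> sl_hom N b n ->
          sl_hom M a' m' -> sl_hom N b' n' ->
          sl_br T (t m n) (t m' n') = - (sgn a b *: t (actNM n m) (actMN m' n'))).

(* (T, t) is the non-abelian tensor product M (x) N: the Lie superalgebra
   generated by the symbols t m n subject to the relations above, i.e. it is
   initial among Lie superalgebras with such a map. *)
Definition is_tensor (M N : sLie F) (actMN : M -> N -> N) (actNM : N -> M -> M)
    (T : sLie F) (t : M -> N -> T) : Prop :=
  [/\ is_sLie T, tensor_rels actMN actNM t
    & forall (T' : sLie F) (t' : M -> N -> T'), is_sLie T' ->
        tensor_rels actMN actNM t' ->
        exists f : T -> T',
          [/\ is_sLie_hom f,
              (forall a b m n, sl_hom M a m -> sl_hom N b n -> f (t m n) = t' m n)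
            & forall g : T -> T', is_sLie_hom g ->
                (forall a b m n, sl_hom M a m -> sl_hom N b n -> g (t m n) = t' m n) ->
                forall x, g x = f x]].

Definition act_span (L N : sLie F) (act : L -> N -> N) (x : N) : Prop :=
  exists s : seq (F * L * N), x = \sum_(p <- s) p.1.1 *: act p.1.2 p.2.

Definition sLie_sum (A B : sLie F) : sLie F :=
  @SLie F (A * B)%type
    (fun b x => sl_hom A b x.1 /\ sl_hom B b x.2)
    (fun x y => (sl_br A x.1 y.1, sl_br B x.2 y.2)).

Definition sum_act_l (L M N : sLie F) (actLN : L -> N -> N) (actMN : M -> N -> N)
    (lm : sLie_sum L M) (n : N) : N := actLN lm.1 n + actMN lm.2 n.

Definition sum_act_r (L M N : sLie F) (actNL : N -> L -> L) (actNM : N -> M -> M)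
    (n : N) (lm : sLie_sum L M) : sLie_sum L M := (actNL n lm.1, actNM n lm.2).

End Defs.

(* Main.v *)
Require Import Defs.
From HB Require Import structures.
From mathcomp Require Import all_boot all_order all_algebra.
From mathcomp Require Import boolp ring.
Set Implicit Arguments. Unset Strict Implicit. Unset Printing Implicit Defensive.
Import GRing.Theory.
Local Open Scope ring_scope.

Section Basics.
Variable F : fieldType.
Local Notation s := (sgn F).

Lemma sgnC a b : s a b = s b a.
Proof. by case: a; case: b. Qed.
Lemma sgnK a b : s a b * s a b = 1.
Proof. by case: a; case: b; rewrite /sgn /= ?mulr1 ?mulrNN ?mulr1. Qed.
Lemma sgn_addl a b c : s (a (+) b) c = s a c * s b c.
Proof. by case: a; case: b; case: c; rewrite /sgn /= ?mulr1 ?mul1r ?mulrNN ?mulr1. Qed.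
Lemma sgn_addr a b c : s c (a (+) b) = s c a * s c b.
Proof. by rewrite sgnC sgn_addl (sgnC a) (sgnC b). Qed.
Lemma sgnKZ (V : lmodType F) a b (v : V) : s a b *: (s a b *: v) = v.
Proof. by rewrite scalerA sgnK scale1r. Qed.
Lemma sgnZ_eq0 (V : lmodType F) a b (v : V) : s a b *: v = 0 -> v = 0.
Proof. by move=> h; rewrite -(sgnKZ a b v) h scaler0. Qed.

Section Lin.
Variables U V : lmodType F.
Variable f : U -> V.
Hypothesis hf : linear_map f.
Lemma linD x y : f (x + y) = f x + f y.
Proof. by have := hf 1 x y; rewrite !scale1r. Qed.
Lemma lin0 : f 0 = 0.
Proof. by have := linD 0 0; rewrite addr0 => /eqP; rewrite -subr_eq0 opprD addrA subrr add0r oppr_eq0 => /eqP. Qed.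
Lemma linZ k x : f (k *: x) = k *: f x.
Proof. by have := hf k x 0; rewrite !addr0 lin0 addr0. Qed.
Lemma linN x : f (- x) = - f x.
Proof. by rewrite -scaleN1r linZ scaleN1r. Qed.
Lemma linB x y : f (x - y) = f x - f y.
Proof. by rewrite linD linN. Qed.
End Lin.

Section Lie.
Variable A : sLie F.
Hypothesis HA : is_sLie A.
Local Notation br := (sl_br A).
Local Notation hom := (sl_hom A).

Lemma hom0 b : hom b 0.
Proof. by case: HA. Qed.
Lemma homL b k (x y : A) : hom b x -> hom b y -> hom b (k *: x + y).
Proof. by case: HA => _ [h _]; apply: h. Qed.
Lemma homD b (x y : A) : hom b x -> hom b y -> hom b (x + y).
Proof. by move=> hx hy; have := homL 1 hx hy; rewrite scale1r. Qed.
Lemma homZ b k (x : A) : hom b x -> hom b (k *: x).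
Proof. by move=> hx; have := homL k hx (hom0 b); rewrite addr0. Qed.
Lemma homN b (x : A) : hom b x -> hom b (- x).
Proof. by move=> hx; rewrite -scaleN1r; apply: homZ. Qed.
Lemma homB b (x y : A) : hom b x -> hom b y -> hom b (x - y).
Proof. by move=> hx hy; apply: homD => //; apply: homN. Qed.
Lemma decomp (x : A) : exists x0 x1, [/\ hom false x0, hom true x1 & x = x0 + x1].
Proof. by case: HA => _ [_ [h _]]; apply: h. Qed.
Lemma hom01 (x : A) : hom false x -> hom true x -> x = 0.
Proof. by case: HA => _ [_ [_ [h _]]]; apply: h. Qed.
Lemma br_bil : bilinear_map br.
Proof. by case: HA => _ [_ [_ [_ [h _]]]]. Qed.
Lemma brDl x y z : br (x + y) z = br x z + br y z.
Proof. by apply: (linD (f := fun u => br u z)); case: br_bil. Qed.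
Lemma brDr x y z : br z (x + y) = br z x + br z y.
Proof. by apply: linD; case: br_bil. Qed.
Lemma brZl k x z : br (k *: x) z = k *: br x z.
Proof. by apply: (linZ (f := fun u => br u z)); case: br_bil. Qed.
Lemma brZr k x z : br z (k *: x) = k *: br z x.
Proof. by apply: linZ; case: br_bil. Qed.
Lemma br0l z : br 0 z = 0.
Proof. by apply: (lin0 (f := fun u => br u z)); case: br_bil. Qed.
Lemma br0r z : br z 0 = 0.
Proof. by apply: lin0; case: br_bil. Qed.
Lemma brNl x z : br (- x) z = - br x z.
Proof. by apply: (linN (f := fun u => br u z)); case: br_bil. Qed.
Lemma brNr x z : br z (- x) = - br z x.
Proof. by apply: linN; case: br_bil. Qed.
Lemma brBl x y z : br (x - y) z = br x z - br y z.
Proof. by rewrite brDl brNl. Qed.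
Lemma brBr x y z : br z (x - y) = br z x - br z y.
Proof. by rewrite brDr brNr. Qed.
Lemma br_hom a b x y : hom a x -> hom b y -> hom (a (+) b) (br x y).
Proof. by case: HA => _ [_ [_ [_ [_ [h _]]]]]; apply: h. Qed.
Lemma br_skew a b x y : hom a x -> hom b y -> br x y = - (s a b *: br y x).
Proof. by case: HA => _ [_ [_ [_ [_ [_ [h _]]]]]]; apply: h. Qed.
Lemma jacobi a b c x y z : hom a x -> hom b y -> hom c z ->
  s a c *: br x (br y z) + s b a *: br y (br z x) + s c b *: br z (br x y) = 0.
Proof. by case: HA => _ [_ [_ [_ [_ [_ [_ h]]]]]]; apply: h. Qed.

Lemma jac0 a b c x y z : hom a x -> hom b y -> hom c z ->
  br x z = 0 -> br y z = 0 -> br z (br x y) = 0.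
Proof.
move=> hx hy hz e1 e2; have := jacobi hx hy hz.
rewrite e2 br0r scaler0 add0r (br_skew hz hx) e1 scaler0 oppr0 br0r scaler0 add0r.
exact: sgnZ_eq0.
Qed.
End Lie.
End Basics.


Section Tens.
Variable F : fieldType.
Local Notation s := (sgn F).

Lemma id_hom (A : sLie F) : is_sLie_hom (fun x : A => x).
Proof. by split. Qed.

Lemma comp_hom (A B C : sLie F) (f : A -> B) (g : B -> C) :
  is_sLie_hom f -> is_sLie_hom g -> is_sLie_hom (fun x => g (f x)).
Proof.
case=> lf pf bf [lg pg bg]; split.
- by move=> k x y; rewrite lf lg.
- by move=> b x hx; apply/pg/pf.
- by move=> x y; rewrite bf bg.
Qed.

Section T.
Variables M N T : sLie F.
Variables (actMN : M -> N -> N) (actNM : N -> M -> M) (t : M -> N -> T).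
Hypothesis Ht : tensor_rels actMN actNM t.

Lemma t_hom a b m n : sl_hom M a m -> sl_hom N b n -> sl_hom T (a (+) b) (t m n).
Proof. by case: Ht => h _; apply: h. Qed.
Lemma t_Zl a b k m n : sl_hom M a m -> sl_hom N b n -> t (k *: m) n = k *: t m n.
Proof. by case: Ht => _ [h _] hm hn; case: (h a b k m n hm hn). Qed.
Lemma t_Zr a b k m n : sl_hom M a m -> sl_hom N b n -> t m (k *: n) = k *: t m n.
Proof. by case: Ht => _ [h _] hm hn; case: (h a b k m n hm hn). Qed.
Lemma t_Dl a b m m' n : sl_hom M a m -> sl_hom M a m' -> sl_hom N b n ->
  t (m + m') n = t m n + t m' n.
Proof. by case: Ht => _ [_ [h _]]; apply: h. Qed.
Lemma t_Dr a b m n n' : sl_hom M a m -> sl_hom N b n -> sl_hom N b n' ->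
  t m (n + n') = t m n + t m n'.
Proof. by case: Ht => _ [_ [_ [h _]]]; apply: h. Qed.
Lemma t_brl a a' b m m' n : sl_hom M a m -> sl_hom M a' m' -> sl_hom N b n ->
  t (sl_br M m m') n = t m (actMN m' n) - s a a' *: t m' (actMN m n).
Proof. by case: Ht => _ [_ [_ [_ [h _]]]]; apply: h. Qed.
Lemma t_brr a b c m n n' : sl_hom M a m -> sl_hom N b n -> sl_hom N c n' ->
  t m (sl_br N n n') = s c (a (+) b) *: t (actNM n' m) n - s a b *: t (actNM n m) n'.
Proof. by case: Ht => _ [_ [_ [_ [_ [h _]]]]]; apply: h. Qed.
Lemma t_br a b a' b' m n m' n' : sl_hom M a m -> sl_hom N b n ->
  sl_hom M a' m' -> sl_hom N b' n' ->
  sl_br T (t m n) (t m' n') = - (s a b *: t (actNM n m) (actMN m' n')).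
Proof. by case: Ht => _ [_ [_ [_ [_ [_ h]]]]]; apply: h. Qed.

Lemma rels_comp (T' : sLie F) (h : T -> T') : is_sLie_hom h ->
  tensor_rels actMN actNM (fun m n => h (t m n)).
Proof.
case=> lh ph bh.
have hZ := linZ lh; have hD := linD lh; have hN := linN lh; have hB := linB lh.
split; first by move=> a b m n hm hn; apply/ph/t_hom.
split; first by move=> a b k m n hm hn; rewrite (t_Zl k hm hn) (t_Zr k hm hn) hZ.
split; first by move=> a b m m' n hm hm' hn; rewrite (t_Dl hm hm' hn) hD.
split; first by move=> a b m n n' hm hn hn'; rewrite (t_Dr hm hn hn') hD.
split; first by move=> a a' b m m' n hm hm' hn; rewrite (t_brl hm hm' hn) hB hZ.
split; first by move=> a b c m n n' hm hn hn'; rewrite (t_brr hm hn hn') hB !hZ.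
by move=> a b a' b' m n m' n' hm hn hm' hn'; rewrite -bh (t_br hm hn hm' hn') hN hZ.
Qed.
End T.

Lemma tensor_uniq (M N T T' : sLie F) (actMN : M -> N -> N) (actNM : N -> M -> M)
  (t : M -> N -> T) (g g' : T -> T') :
  is_tensor actMN actNM t -> is_sLie T' -> is_sLie_hom g -> is_sLie_hom g' ->
  (forall a b m n, sl_hom M a m -> sl_hom N b n -> g (t m n) = g' (t m n)) ->
  forall x, g x = g' x.
Proof.
case=> HT Hr U HT' hg hg' e x.
have [f [_ _ uf]] := U T' (fun m n => g (t m n)) HT' (rels_comp Hr hg).
rewrite (uf g hg) // (uf g' hg') // => a b m n hm hn; by rewrite (e a b).
Qed.

End Tens.


Section Gen.
Variable F : fieldType.
Local Notation s := (sgn F).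
Variables M N T : sLie F.
Variables (actMN : M -> N -> N) (actNM : N -> M -> M) (t : M -> N -> T).
Hypothesis HM : is_sLie M.
Hypothesis HN : is_sLie N.
Hypothesis HT : is_tensor actMN actNM t.
Hypothesis pMN : forall a b m n, sl_hom M a m -> sl_hom N b n -> sl_hom N (a (+) b) (actMN m n).
Hypothesis pNM : forall a b n m, sl_hom N a n -> sl_hom M b m -> sl_hom M (a (+) b) (actNM n m).

Let HTL : is_sLie T. Proof. by case: HT. Qed.
Let Hr : tensor_rels actMN actNM t. Proof. by case: HT. Qed.

Inductive gen : T -> Prop :=
| gG a b m n : sl_hom M a m -> sl_hom N b n -> gen (t m n)
| g0 : gen 0
| gL (k : F) x y : gen x -> gen y -> gen (k *: x + y)
| gB a b x y : sl_hom T a x -> sl_hom T b y -> gen x -> gen y -> gen (sl_br T x y).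

Lemma gD x y : gen x -> gen y -> gen (x + y).
Proof. by move=> hx hy; have := gL 1 hx hy; rewrite scale1r. Qed.

Lemma gen_hom_split b x : sl_hom T b x -> gen x ->
  exists x0 x1, [/\ gen x0, gen x1, sl_hom T false x0, sl_hom T true x1 & x = x0 + x1].
Proof.
move=> hx gx; case: b hx => hx.
- by exists 0, x; rewrite add0r; split => //; [exact: g0|exact: hom0 HTL false].
- by exists x, 0; rewrite addr0; split => //; [exact: g0|exact: hom0 HTL true].
Qed.

Lemma gen_graded x : gen x ->
  exists x0 x1, [/\ gen x0, gen x1, sl_hom T false x0, sl_hom T true x1 & x = x0 + x1].
Proof.
elim=> {x}.
- move=> a b m n hm hn; apply: (gen_hom_split (t_hom Hr hm hn)); exact (gG hm hn).
- by exists 0, 0; rewrite addr0; split; [exact: g0|exact: g0|exact: hom0 HTL false|exact: hom0 HTL true|by []].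
- move=> k x y _ [x0 [x1 [gx0 gx1 hx0 hx1 ->]]] _ [y0 [y1 [gy0 gy1 hy0 hy1 ->]]].
  exists (k *: x0 + y0), (k *: x1 + y1); split.
  + exact: gL gx0 gy0.
  + exact: gL gx1 gy1.
  + exact (homL HTL k hx0 hy0).
  + exact (homL HTL k hx1 hy1).
  + by rewrite scalerDr addrACA.
- move=> a b x y hx hy gx _ gy _; apply: (gen_hom_split (br_hom HTL hx hy)); exact: gB hx hy gx gy.
Qed.

Lemma gen_br x y : gen x -> gen y -> gen (sl_br T x y).
Proof.
move=> /gen_graded [x0 [x1 [gx0 gx1 hx0 hx1 ->]]] /gen_graded [y0 [y1 [gy0 gy1 hy0 hy1 ->]]].
rewrite !(brDl HTL, brDr HTL).
by apply: gD; apply: gD; apply: gB; eassumption.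
Qed.

Definition genb : {pred T} := fun x => `[< gen x >].
Lemma genb_closed : GRing.submod_closed genb.
Proof.
split; first by apply/asboolP; exact: g0.
by move=> k x y /asboolP hx /asboolP hy; apply/asboolP; exact: gL.
Qed.
HB.instance Definition _ := GRing.isSubmodClosed.Build F T genb genb_closed.
HB.instance Definition _ := [SubChoice_isSubLmodule of {x : T | genb x} by <:].

Local Notation S := {x : T | genb x}.

Lemma genbP (x : S) : gen (val x).
Proof. exact/asboolP/(valP x). Qed.

Definition sbr (x y : S) : S :=
  Sub (sl_br T (val x) (val y)) (asboolT (gen_br (genbP x) (genbP y))).

Definition SL : sLie F := @SLie F S (fun b x => sl_hom T b (val x)) sbr.

Lemma valbr (x y : S) : val (sbr x y) = sl_br T (val x) (val y).
Proof. by rewrite /sbr SubK. Qed.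

Lemma SL_Lie : is_sLie SL.
Proof.
split; first by move=> b; exact (hom0 HTL b).
split; first by move=> b k x y /= hx hy; exact (homL HTL k hx hy).
split.
  move=> x; have [x0 [x1 [gx0 gx1 hx0 hx1 ex]]] := gen_graded (genbP x).
  exists (Sub x0 (asboolT gx0)), (Sub x1 (asboolT gx1)); split => /=; rewrite ?SubK //.
  by apply: val_inj; rewrite /= ?SubK.
split; first by move=> x /= h0 h1; apply: val_inj; exact (hom01 HTL h0 h1).
split.
  split=> [v|u] k x y; apply: val_inj; rewrite /= ?valbr /=.
  - by rewrite (brDl HTL) (brZl HTL).
  - by rewrite (brDr HTL) (brZr HTL).
split; first by move=> a b x y /= hx hy; rewrite ?valbr; exact (br_hom HTL hx hy).
split; first by move=> a b x y /= hx hy; apply: val_inj; rewrite /= ?valbr; exact (br_skew HTL hx hy).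
move=> a b c x y z /= hx hy hz; apply: val_inj; rewrite /= ?valbr; exact (jacobi HTL hx hy hz).
Qed.

Definition tS (m : M) (n : N) : S := insubd 0 (t m n).

Lemma valtS a b m n : sl_hom M a m -> sl_hom N b n -> val (tS m n) = t m n.
Proof. by move=> hm hn; rewrite /tS insubdK //; apply/asboolP; exact (gG hm hn). Qed.

Lemma tS_rels : tensor_rels actMN actNM (tS : M -> N -> SL).
Proof.
split; first by move=> a b m n hm hn /=; rewrite (valtS hm hn); exact (t_hom Hr hm hn).
split.
  move=> a b k m n hm hn; split; apply: val_inj => /=.
  - by rewrite (valtS (homZ HM k hm) hn) (valtS hm hn) (t_Zl Hr k hm hn).
  - by rewrite (valtS hm (homZ HN k hn)) (valtS hm hn) (t_Zr Hr k hm hn).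
split.
  move=> a b m m' n hm hm' hn; apply: val_inj => /=.
  by rewrite (valtS (homD HM hm hm') hn) (valtS hm hn) (valtS hm' hn) (t_Dl Hr hm hm' hn).
split.
  move=> a b m n n' hm hn hn'; apply: val_inj => /=.
  by rewrite (valtS hm (homD HN hn hn')) (valtS hm hn) (valtS hm hn') (t_Dr Hr hm hn hn').
split.
  move=> a a' b m m' n hm hm' hn; apply: val_inj => /=.
  rewrite (valtS (br_hom HM hm hm') hn) (valtS hm (pMN hm' hn)) (valtS hm' (pMN hm hn)).
  exact (t_brl Hr hm hm' hn).
split.
  move=> a b c m n n' hm hn hn'; apply: val_inj => /=.
  rewrite (valtS hm (br_hom HN hn hn')) (valtS (pNM hn' hm) hn) (valtS (pNM hn hm) hn').
  exact (t_brr Hr hm hn hn').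
move=> a b a' b' m n m' n' hm hn hm' hn'; apply: val_inj => /=.
rewrite ?valbr /= (valtS hm hn) (valtS hm' hn') (valtS (pNM hn hm) (pMN hm' hn')).
exact (t_br Hr hm hn hm' hn').
Qed.

Lemma val_hom : is_sLie_hom (fun x : SL => val x).
Proof. by split => // x y /=; rewrite valbr. Qed.

Lemma gen_all x : gen x.
Proof.
case: HT => _ _ U.
have [f [hf ft _]] := U SL tS SL_Lie tS_rels.
have e : forall x, val (f x) = x.
  apply: (tensor_uniq HT HTL (comp_hom hf val_hom) (id_hom T)) => a b m n hm hn /=.
  by rewrite (ft _ _ _ _ hm hn) (valtS hm hn).
rewrite -(e x); exact: genbP.
Qed.

End Gen.

Lemma tensor_ind (F : fieldType) (M N T : sLie F)
  (actMN : M -> N -> N) (actNM : N -> M -> M) (t : M -> N -> T) :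
  is_sLie M -> is_sLie N -> is_tensor actMN actNM t ->
  (forall a b m n, sl_hom M a m -> sl_hom N b n -> sl_hom N (a (+) b) (actMN m n)) ->
  (forall a b n m, sl_hom N a n -> sl_hom M b m -> sl_hom M (a (+) b) (actNM n m)) ->
  forall P : T -> Prop,
  (forall a b m n, sl_hom M a m -> sl_hom N b n -> P (t m n)) ->
  P 0 -> (forall k x y, P x -> P y -> P (k *: x + y)) ->
  (forall a b x y, sl_hom T a x -> sl_hom T b y -> P x -> P y -> P (sl_br T x y)) ->
  forall x, P x.
Proof.
move=> HM HN HT pMN pNM P h1 h2 h3 h4 x.
by elim: (gen_all HM HN HT pMN pNM x) => //; eauto.
Qed.


Section Sum.
Variable F : fieldType.
Local Notation s := (sgn F).

Lemma pairE (A B : Type) (x y : A * B) : x.1 = y.1 -> x.2 = y.2 -> x = y.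
Proof. by case: x; case: y => /= ? ? ? ? -> ->. Qed.

Lemma sum_Lie (A B : sLie F) : is_sLie A -> is_sLie B -> is_sLie (sLie_sum A B).
Proof.
move=> HA HB.
split; first by move=> b; split; [exact (hom0 HA b)|exact (hom0 HB b)].
split; first by move=> b k x y [hx1 hx2] [hy1 hy2]; split; [exact (homL HA k hx1 hy1)|exact (homL HB k hx2 hy2)].
split.
  move=> [x y]; have [x0 [x1 [h0 h1 ex]]] := decomp HA x.
  have [y0 [y1 [k0 k1 ey]]] := decomp HB y.
  by exists (x0, y0), (x1, y1); split => //; apply: pairE.
split; first by move=> x [h0 k0] [h1 k1]; apply: pairE; [exact (hom01 HA h0 h1)|exact (hom01 HB k0 k1)].
split.
  split=> [v|u] k x y; apply: pairE => /=.
  - by rewrite (brDl HA) (brZl HA).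
  - by rewrite (brDl HB) (brZl HB).
  - by rewrite (brDr HA) (brZr HA).
  - by rewrite (brDr HB) (brZr HB).
split; first by move=> a b x y [hx1 hx2] [hy1 hy2]; split; [exact (br_hom HA hx1 hy1)|exact (br_hom HB hx2 hy2)].
split; first by move=> a b x y [hx1 hx2] [hy1 hy2]; apply: pairE; [exact (br_skew HA hx1 hy1)|exact (br_skew HB hx2 hy2)].
move=> a b c x y z [hx1 hx2] [hy1 hy2] [hz1 hz2]; apply: pairE.
- exact (jacobi HA hx1 hy1 hz1).
- exact (jacobi HB hx2 hy2 hz2).
Qed.

Lemma inl_hom (A B : sLie F) : is_sLie B -> is_sLie_hom (fun x : A => (x, 0) : sLie_sum A B).
Proof.
move=> HB; split.
- by move=> k x y; apply: pairE => //=; rewrite scaler0 addr0.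
- by move=> b x hx; split => //; exact (hom0 HB b).
- by move=> x y; apply: pairE => //=; rewrite (br0l HB).
Qed.

Lemma inr_hom (A B : sLie F) : is_sLie A -> is_sLie_hom (fun x : B => (0, x) : sLie_sum A B).
Proof.
move=> HA; split.
- by move=> k x y; apply: pairE => //=; rewrite scaler0 addr0.
- by move=> b x hx; split => //; exact (hom0 HA b).
- by move=> x y; apply: pairE => //=; rewrite (br0l HA).
Qed.
End Sum.

Section Swap.
Variable F : fieldType.
Local Notation s := (sgn F).
Variables M N T T' : sLie F.
Variables (actMN : M -> N -> N) (actNM : N -> M -> M) (t : M -> N -> T) (t' : N -> M -> T').
Hypothesis HM : is_sLie M.
Hypothesis HN : is_sLie N.
Hypothesis HT : is_tensor actMN actNM t.
Hypothesis HT' : is_tensor actNM actMN t'.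
Hypothesis pMN : forall a b m n, sl_hom M a m -> sl_hom N b n -> sl_hom N (a (+) b) (actMN m n).
Hypothesis pNM : forall a b n m, sl_hom N a n -> sl_hom M b m -> sl_hom M (a (+) b) (actNM n m).

Let HTL : is_sLie T. Proof. by case: HT. Qed.
Let Hr : tensor_rels actMN actNM t. Proof. by case: HT. Qed.

Lemma t0r a m : sl_hom M a m -> t m 0 = 0.
Proof.
move=> hm; have := t_Zr Hr 0 hm (hom0 HN false).
by rewrite scaler0 scale0r.
Qed.
Lemma t0l b n : sl_hom N b n -> t 0 n = 0.
Proof.
move=> hn; have := t_Zl Hr 0 (hom0 HM false) hn.
by rewrite scaler0 scale0r.
Qed.

Definition par (A : sLie F) (x : A) : bool := `[< sl_hom A true x >].

Lemma par_eq (A : sLie F) (HA : is_sLie A) b (x : A) : sl_hom A b x -> x <> 0 -> par x = b.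
Proof.
rewrite /par => hx nx; case: b hx => hx; first by apply/asboolP.
apply/asboolP => h1; exact: nx (hom01 HA hx h1).
Qed.

Definition u (n : N) (m : M) : T := - (s (par n) (par m) *: t m n).

Lemma uE a b n m : sl_hom N b n -> sl_hom M a m -> u n m = - (s b a *: t m n).
Proof.
move=> hn hm; rewrite /u.
have [->|nn] := eqVneq n 0; first by rewrite (t0r hm) !scaler0.
have [->|nm] := eqVneq m 0; first by rewrite (t0l hn) !scaler0.
by rewrite (par_eq HN hn (elimN eqP nn)) (par_eq HM hm (elimN eqP nm)).
Qed.

End Swap.


Section Swap2.
Variable F : fieldType.
Local Notation s := (sgn F).
Variables M N T T' : sLie F.
Variables (actMN : M -> N -> N) (actNM : N -> M -> M) (t : M -> N -> T) (t' : N -> M -> T').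
Hypothesis HM : is_sLie M.
Hypothesis HN : is_sLie N.
Hypothesis HT : is_tensor actMN actNM t.
Hypothesis pMN : forall a b m n, sl_hom M a m -> sl_hom N b n -> sl_hom N (a (+) b) (actMN m n).
Hypothesis pNM : forall a b n m, sl_hom N a n -> sl_hom M b m -> sl_hom M (a (+) b) (actNM n m).

Let HTL : is_sLie T. Proof. by case: HT. Qed.
Let Hr : tensor_rels actMN actNM t. Proof. by case: HT. Qed.
Local Notation uu := (u t).

Lemma u_rels : tensor_rels actNM actMN uu.
Proof.
have uE' := uE HM HN HT.
split.
  move=> b a n m hn hm; rewrite (uE' _ _ _ _ hn hm); apply: (homN HTL); apply: (homZ HTL).
  by rewrite addbC; exact (t_hom Hr hm hn).
split.
  move=> b a k n m hn hm; rewrite (uE' _ _ _ _ (homZ HN k hn) hm) (uE' _ _ _ _ hn (homZ HM k hm)).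
  rewrite (uE' _ _ _ _ hn hm) (t_Zl Hr k hm hn) (t_Zr Hr k hm hn).
  by rewrite !scalerN !scalerA mulrC.
split.
  move=> b a n n' m hn hn' hm.
  rewrite (uE' _ _ _ _ (homD HN hn hn') hm) (uE' _ _ _ _ hn hm) (uE' _ _ _ _ hn' hm).
  by rewrite (t_Dr Hr hm hn hn') scalerDr opprD.
split.
  move=> b a n m m' hn hm hm'.
  rewrite (uE' _ _ _ _ hn (homD HM hm hm')) (uE' _ _ _ _ hn hm) (uE' _ _ _ _ hn hm').
  by rewrite (t_Dl Hr hm hm' hn) scalerDr opprD.
split.
  move=> b b' a n n' m hn hn' hm.
  rewrite (uE' _ _ _ _ (br_hom HN hn hn') hm) (uE' _ _ _ _ hn (pNM hn' hm)) (uE' _ _ _ _ hn' (pNM hn hm)).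
  rewrite (t_brr Hr hm hn hn').
  set X := t _ n; set Y := t _ n'.
  rewrite scalerBr !scalerN !scalerA opprB opprK addrC.
  rewrite -!scaleNr.
  by congr (_ *: _ + _ *: _); rewrite /sgn; destruct a, b, b'; simpl; ring.
split.
  move=> b a a' n m m' hn hm hm'.
  rewrite (uE' _ _ _ _ hn (br_hom HM hm hm')) (uE' _ _ _ _ (pMN hm' hn) hm) (uE' _ _ _ _ (pMN hm hn) hm').
  rewrite (t_brl Hr hm hm' hn).
  set X := t m _; set Y := t m' _.
  rewrite scalerBr !scalerN !scalerA opprB !opprK addrC -!scaleNr.
  by congr (_ *: _ + _ *: _); rewrite /sgn; destruct a, b, a'; simpl; ring.
move=> b a b' a' n m n' m' hn hm hn' hm'.
rewrite (uE' _ _ _ _ hn hm) (uE' _ _ _ _ hn' hm') (uE' _ _ _ _ (pMN hm hn) (pNM hn' hm')).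
rewrite (brNl HTL) (brNr HTL) opprK (brZl HTL) (brZr HTL).
rewrite (br_skew HTL (t_hom Hr hm hn) (t_hom Hr hm' hn')) (t_br Hr hm' hn' hm hn).
rewrite !scalerN !opprK !scalerA.
by congr (_ *: _); rewrite /sgn; destruct a, b, a', b'; simpl; ring.
Qed.

Lemma swap_zero (T2 : sLie F) (t2 : N -> M -> T2) : is_tensor actNM actMN t2 ->
  forall a b m x, sl_hom M a m -> sl_hom N b x -> t2 x m = 0 -> t m x = 0.
Proof.
case=> _ _ U a b m x hm hx e.
have [f [[lf _ _] ft _]] := U T uu HTL u_rels.
have := ft _ _ _ _ hx hm; rewrite e (lin0 lf) (uE HM HN HT hx hm).
move/eqP; rewrite eq_sym oppr_eq0 => /eqP; exact: sgnZ_eq0.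
Qed.
End Swap2.


Section Act.
Variable F : fieldType.
Local Notation s := (sgn F).
Variables P M : sLie F.
Variable act : P -> M -> M.
Hypothesis Ha : is_action act.

Lemma act_hom a b p m : sl_hom P a p -> sl_hom M b m -> sl_hom M (a (+) b) (act p m).
Proof. by case: Ha => _ h _ _; apply: h. Qed.
Lemma act_brl a a' p p' m : sl_hom P a p -> sl_hom P a' p' ->
  act (sl_br P p p') m = act p (act p' m) - s a a' *: act p' (act p m).
Proof. by case: Ha => _ _ h _; apply: h. Qed.
Lemma act_der a b p m m' : sl_hom P a p -> sl_hom M b m ->
  act p (sl_br M m m') = sl_br M (act p m) m' + s a b *: sl_br M m (act p m').
Proof. by case: Ha => _ _ _ h; apply: h. Qed.
Lemma act_linl m : linear_map (fun p => act p m).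
Proof. by case: Ha => [[h _] _ _ _]; apply: h. Qed.
Lemma act_linr p : linear_map (act p).
Proof. by case: Ha => [[_ h] _ _ _]; apply: h. Qed.
Lemma actDl p p' m : act (p + p') m = act p m + act p' m.
Proof. exact: (linD (act_linl m)). Qed.
Lemma actDr p m m' : act p (m + m') = act p m + act p m'.
Proof. exact: (linD (act_linr p)). Qed.
Lemma actZl k p m : act (k *: p) m = k *: act p m.
Proof. exact: (linZ (act_linl m)). Qed.
Lemma actZr k p m : act p (k *: m) = k *: act p m.
Proof. exact: (linZ (act_linr p)). Qed.
Lemma act0l m : act 0 m = 0.
Proof. exact: (lin0 (act_linl m)). Qed.
Lemma act0r p : act p 0 = 0.
Proof. exact: (lin0 (act_linr p)). Qed.
End Act.


Lemma zid (V : zmodType) (A B C D E G : V) :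
  A - E + (D - G) = A + B + (C + D) - (E + C + (B + G)).
Proof.
rewrite !opprD !addrA.
rewrite [RHS](ACl ((1*5*4*8)*((2*7)*(3*6)))) /=.
by rewrite !subrr !addr0.
Qed.

Section Acts.
Variable F : fieldType.
Local Notation s := (sgn F).
Variables L M N : sLie F.
Hypotheses (HL : is_sLie L) (HM : is_sLie M) (HN : is_sLie N).
Variables (actLN : L -> N -> N) (actNL : N -> L -> L)
  (actMN : M -> N -> N) (actNM : N -> M -> M).
Hypotheses (aLN : is_action actLN) (aNL : is_action actNL)
  (aMN : is_action actMN) (aNM : is_action actNM).
Hypothesis hii : forall a b c (l : L) (m : M) (n : N),
      sl_hom L a l -> sl_hom M b m -> sl_hom N c n ->
      actLN l (actMN m n) = sgn F a b *: actMN m (actLN l n).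

Lemma hii' a b (l : L) (m : M) (n : N) : sl_hom L a l -> sl_hom M b m ->
  actLN l (actMN m n) = s a b *: actMN m (actLN l n).
Proof.
move=> hl hm; have [n0 [n1 [h0 h1 ->]]] := decomp HN n.
by rewrite !(actDr aMN, actDr aLN) (hii hl hm h0) (hii hl hm h1) scalerDr.
Qed.

Lemma sumL_action : is_action (sum_act_l actLN actMN).
Proof.
rewrite /sum_act_l; split.
- split => [n | lm] k x y /=.
  + by rewrite (actDl aLN) (actZl aLN) (actDl aMN) (actZl aMN) scalerDr addrACA.
  + by rewrite (actDr aLN) (actZr aLN) (actDr aMN) (actZr aMN) scalerDr addrACA.
- move=> a b [l m] n [hl hm] hn /=; apply: (homD HN); [exact (act_hom aLN hl hn)|exact (act_hom aMN hm hn)].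
- move=> a a' [l m] [l' m'] n [hl hm] [hl' hm'] /=.
  rewrite (act_brl aLN _ hl hl') (act_brl aMN _ hm hm').
  rewrite !(actDr aLN, actDr aMN) (hii' _ hl hm') (hii' _ hl' hm).
  set A := actLN l (actLN l' n); set B := actMN m' (actLN l n).
  set C := actMN m (actLN l' n); set D := actMN m (actMN m' n).
  set E := actLN l' (actLN l n); set G := actMN m' (actMN m n).
  rewrite !scalerDr scalerA (sgnC _ a' a) sgnK scale1r.
  exact: zid.
- move=> a b [l m] n n' [hl hm] hn /=.
  rewrite (act_der aLN _ hl hn) (act_der aMN _ hm hn) (brDl HN) (brDr HN) scalerDr.
  by rewrite addrACA.
Qed.

Lemma sumR_action : is_action (sum_act_r actNL actNM).
Proof.
rewrite /sum_act_r; split.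
- split => [lm | n] k x y; apply: pairE => /=.
  + by rewrite (actDl aNL) (actZl aNL).
  + by rewrite (actDl aNM) (actZl aNM).
  + by rewrite (actDr aNL) (actZr aNL).
  + by rewrite (actDr aNM) (actZr aNM).
- move=> a b n [l m] hn [hl hm]; split; [exact (act_hom aNL hn hl)|exact (act_hom aNM hn hm)].
- move=> a a' n n' [l m] hn hn'; apply: pairE => /=.
  + exact (act_brl aNL _ hn hn').
  + exact (act_brl aNM _ hn hn').
- move=> a b n [l m] [l' m'] hn [hl hm]; apply: pairE => /=.
  + exact (act_der aNL _ hn hl).
  + exact (act_der aNM _ hn hm).
Qed.
End Acts.


Section Main.
Variable F : fieldType.
Local Notation s := (sgn F).
Variables L M N : sLie F.
Hypotheses (HL : is_sLie L) (HM : is_sLie M) (HN : is_sLie N).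
Variables (actLN : L -> N -> N) (actNL : N -> L -> L)
  (actMN : M -> N -> N) (actNM : N -> M -> M).
Hypotheses (aLN : is_action actLN) (aNL : is_action actNL)
  (aMN : is_action actMN) (aNM : is_action actNM).
Variables (TNM : sLie F) (tNM : N -> M -> TNM) (TNL : sLie F) (tNL : N -> L -> TNL).
Hypotheses (HTNM : is_tensor actNM actMN tNM) (HTNL : is_tensor actNL actLN tNL).
Hypothesis hiii1 : forall a b (x : N) (m : M), act_span actLN x ->
      sl_hom N a x -> sl_hom M b m -> tNM x m = 0.
Hypothesis hiii2 : forall a b (x : N) (l : L), act_span actMN x ->
      sl_hom N a x -> sl_hom L b l -> tNL x l = 0.
Variables (T1 : sLie F) (t1 : L -> N -> T1) (T2 : sLie F) (t2 : M -> N -> T2).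
Hypotheses (HT1 : is_tensor actLN actNL t1) (HT2 : is_tensor actMN actNM t2).

Let HT1L : is_sLie T1. Proof. by case: HT1. Qed.
Let HT2L : is_sLie T2. Proof. by case: HT2. Qed.
Let Hr1 : tensor_rels actLN actNL t1. Proof. by case: HT1. Qed.
Let Hr2 : tensor_rels actMN actNM t2. Proof. by case: HT2. Qed.

Lemma cross1 a a' b (l : L) (m' : M) (n : N) : sl_hom L a l -> sl_hom M a' m' -> sl_hom N b n ->
  t1 l (actMN m' n) = 0.
Proof.
move=> hl hm hn.
apply: (swap_zero HL HN HT1 (act_hom aLN) (act_hom aNL) HTNL hl (act_hom aMN hm hn)).
apply: (hiii2 _ (act_hom aMN hm hn) hl).
by exists [:: (1, m', n)]; rewrite big_seq1 scale1r.
Qed.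

Lemma cross2 a a' b (m : M) (l' : L) (n : N) : sl_hom M a m -> sl_hom L a' l' -> sl_hom N b n ->
  t2 m (actLN l' n) = 0.
Proof.
move=> hm hl hn.
apply: (swap_zero HM HN HT2 (act_hom aMN) (act_hom aNM) HTNM hm (act_hom aLN hl hn)).
apply: (hiii1 _ (act_hom aLN hl hn) hm).
by exists [:: (1, l', n)]; rewrite big_seq1 scale1r.
Qed.


Local Notation P := (sLie_sum L M).
Local Notation S12 := (sLie_sum T1 T2).

Definition tp (p : P) (n : N) : S12 := (t1 p.1 n, t2 p.2 n).

Lemma tp_rels : tensor_rels (sum_act_l actLN actMN) (sum_act_r actNL actNM) tp.
Proof.
rewrite /tp /sum_act_l /sum_act_r.
split.
  move=> a b [l m] n [hl hm] hn; split; [exact (t_hom Hr1 hl hn)|exact (t_hom Hr2 hm hn)].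
split.
  move=> a b k [l m] n [hl hm] hn; split; apply: pairE => /=.
  - exact (t_Zl Hr1 k hl hn).
  - exact (t_Zl Hr2 k hm hn).
  - exact (t_Zr Hr1 k hl hn).
  - exact (t_Zr Hr2 k hm hn).
split.
  move=> a b [l m] [l' m'] n [hl hm] [hl' hm'] hn; apply: pairE => /=.
  - exact (t_Dl Hr1 hl hl' hn).
  - exact (t_Dl Hr2 hm hm' hn).
split.
  move=> a b [l m] n n' [hl hm] hn hn'; apply: pairE => /=.
  - exact (t_Dr Hr1 hl hn hn').
  - exact (t_Dr Hr2 hm hn hn').
split.
  move=> a a' b [l m] [l' m'] n [hl hm] [hl' hm'] hn; apply: pairE => /=.
  - rewrite (t_Dr Hr1 hl (act_hom aLN hl' hn) (act_hom aMN hm' hn)).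
    rewrite (t_Dr Hr1 hl' (act_hom aLN hl hn) (act_hom aMN hm hn)).
    rewrite (cross1 hl hm' hn) (cross1 hl' hm hn) !addr0.
    exact (t_brl Hr1 hl hl' hn).
  - rewrite (t_Dr Hr2 hm (act_hom aLN hl' hn) (act_hom aMN hm' hn)).
    rewrite (t_Dr Hr2 hm' (act_hom aLN hl hn) (act_hom aMN hm hn)).
    rewrite (cross2 hm hl' hn) (cross2 hm' hl hn) !add0r.
    exact (t_brl Hr2 hm hm' hn).
split.
  move=> a b c [l m] n n' [hl hm] hn hn'; apply: pairE => /=.
  - exact (t_brr Hr1 hl hn hn').
  - exact (t_brr Hr2 hm hn hn').
move=> a b a' b' [l m] n [l' m'] n' [hl hm] hn [hl' hm'] hn'; apply: pairE => /=.
- rewrite (t_Dr Hr1 (act_hom aNL hn hl) (act_hom aLN hl' hn') (act_hom aMN hm' hn')).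
  rewrite (cross1 (act_hom aNL hn hl) hm' hn') addr0.
  exact (t_br Hr1 hl hn hl' hn').
- rewrite (t_Dr Hr2 (act_hom aNM hn hm) (act_hom aLN hl' hn') (act_hom aMN hm' hn')).
  rewrite (cross2 (act_hom aNM hn hm) hl' hn') add0r.
  exact (t_br Hr2 hm hn hm' hn').
Qed.

Variables (T : sLie F) (t : P -> N -> T).
Hypothesis HT : is_tensor (sum_act_l actLN actMN) (sum_act_r actNL actNM) t.
Let HTL : is_sLie T. Proof. by case: HT. Qed.
Let Hr : tensor_rels (sum_act_l actLN actMN) (sum_act_r actNL actNM) t. Proof. by case: HT. Qed.

Lemma homP1 a (l : L) : sl_hom L a l -> sl_hom P a ((l, 0) : P).
Proof. by move=> hl; split => //; exact (hom0 HM a). Qed.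
Lemma homP2 a (m : M) : sl_hom M a m -> sl_hom P a ((0, m) : P).
Proof. by move=> hm; split => //; exact (hom0 HL a). Qed.

Lemma g1_rels : tensor_rels actLN actNL (fun l n => t ((l, 0) : P) n).
Proof.
split.
  by move=> a b l n hl hn; exact (t_hom Hr (homP1 hl) hn).
split.
  move=> a b k l n hl hn; split; last exact (t_Zr Hr k (homP1 hl) hn).
  have -> : ((k *: l, 0) : P) = k *: (l, 0) by apply: pairE; rewrite /= ?scaler0.
  exact (t_Zl Hr k (homP1 hl) hn).
split.
  move=> a b l l' n hl hl' hn.
  have -> : ((l + l', 0) : P) = (l, 0) + (l', 0) by apply: pairE; rewrite /= ?addr0.
  exact (t_Dl Hr (homP1 hl) (homP1 hl') hn).
split.
  by move=> a b l n n' hl hn hn'; exact (t_Dr Hr (homP1 hl) hn hn').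
split.
  move=> a a' b l l' n hl hl' hn.
  have -> : ((sl_br L l l', 0) : P) = sl_br P (l, 0) (l', 0) by apply: pairE; rewrite /= ?(br0l HM).
  rewrite (t_brl Hr (homP1 hl) (homP1 hl') hn) /sum_act_l /=.
  by rewrite !(act0l aMN) !addr0.
split.
  move=> a b c l n n' hl hn hn'.
  rewrite (t_brr Hr (homP1 hl) hn hn') /sum_act_r /=.
  by rewrite !(act0r aNM).
move=> a b a' b' l n l' n' hl hn hl' hn'.
rewrite (t_br Hr (homP1 hl) hn (homP1 hl') hn') /sum_act_l /sum_act_r /=.
by rewrite (act0r aNM) (act0l aMN) addr0.
Qed.

Lemma g2_rels : tensor_rels actMN actNM (fun m n => t ((0, m) : P) n).
Proof.
split.
  by move=> a b m n hm hn; exact (t_hom Hr (homP2 hm) hn).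
split.
  move=> a b k m n hm hn; split; last exact (t_Zr Hr k (homP2 hm) hn).
  have -> : ((0, k *: m) : P) = k *: (0, m) by apply: pairE; rewrite /= ?scaler0.
  exact (t_Zl Hr k (homP2 hm) hn).
split.
  move=> a b m m' n hm hm' hn.
  have -> : ((0, m + m') : P) = (0, m) + (0, m') by apply: pairE; rewrite /= ?addr0.
  exact (t_Dl Hr (homP2 hm) (homP2 hm') hn).
split.
  by move=> a b m n n' hm hn hn'; exact (t_Dr Hr (homP2 hm) hn hn').
split.
  move=> a a' b m m' n hm hm' hn.
  have -> : ((0, sl_br M m m') : P) = sl_br P (0, m) (0, m') by apply: pairE; rewrite /= ?(br0l HL).
  rewrite (t_brl Hr (homP2 hm) (homP2 hm') hn) /sum_act_l /=.
  by rewrite !(act0l aLN) !add0r.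
split.
  move=> a b c m n n' hm hn hn'.
  rewrite (t_brr Hr (homP2 hm) hn hn') /sum_act_r /=.
  by rewrite !(act0r aNL).
move=> a b a' b' m n m' n' hm hn hm' hn'.
rewrite (t_br Hr (homP2 hm) hn (homP2 hm') hn') /sum_act_l /sum_act_r /=.
by rewrite (act0r aNL) (act0l aLN) add0r.
Qed.

Lemma main_iso : exists f : T -> S12, is_sLie_iso f /\
  forall a b (l : L) (m : M) (n : N), sl_hom L a l -> sl_hom M a m -> sl_hom N b n ->
    f (t (l, m) n) = (t1 l n, t2 m n).
Proof.
have HS := sum_Lie HT1L HT2L.
case: (HT) => _ _ U.
have [f [hf ft _]] := U S12 tp HS tp_rels.
case: (HT1) => _ _ U1.
have [g1 [hg1 ft1 _]] := U1 T _ HTL g1_rels.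
case: (HT2) => _ _ U2.
have [g2 [hg2 ft2 _]] := U2 T _ HTL g2_rels.
have [lg1 pg1 bg1] := hg1.
have [lg2 pg2 bg2] := hg2.
have [lf pf bf] := hf.
have stage1 : forall a b (l : L) (n : N) (v : T2), sl_hom L a l -> sl_hom N b n ->
    sl_br T (g1 (t1 l n)) (g2 v) = 0.
  move=> a b l n v hl hn; rewrite (ft1 _ _ _ _ hl hn); move: v.
  have hz := t_hom Hr (homP1 hl) hn.
  apply: (tensor_ind HM HN HT2 (act_hom aMN) (act_hom aNM)).
  - move=> c d m n' hm hn'.
    rewrite (ft2 _ _ _ _ hm hn') (t_br Hr (homP1 hl) hn (homP2 hm) hn') /sum_act_r /sum_act_l /=.
    rewrite (act0r aNM) (act0l aLN) add0r.
    rewrite -(ft1 _ _ _ _ (act_hom aNL hn hl) (act_hom aMN hm hn')).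
    by rewrite (cross1 (act_hom aNL hn hl) hm hn') (lin0 lg1) scaler0 oppr0.
  - by rewrite (lin0 lg2) (br0r HTL).
  - by move=> k x y ex ey; rewrite lg2 (brDr HTL) (brZr HTL) ex ey scaler0 addr0.
  - move=> c d x y hx hy ex ey; rewrite bg2.
    apply: (jac0 HTL (pg2 _ _ hx) (pg2 _ _ hy) hz).
    + by rewrite (br_skew HTL (pg2 _ _ hx) hz) ex scaler0 oppr0.
    + by rewrite (br_skew HTL (pg2 _ _ hy) hz) ey scaler0 oppr0.
have stage2 : forall (u : T1) (v : T2), sl_br T (g1 u) (g2 v) = 0.
  apply: (tensor_ind HL HN HT1 (act_hom aLN) (act_hom aNL)).
  - by move=> a b l n hl hn v; exact (stage1 _ _ _ _ v hl hn).
  - by move=> v; rewrite (lin0 lg1) (br0l HTL).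
  - by move=> k x y ex ey v; rewrite lg1 (brDl HTL) (brZl HTL) ex ey scaler0 addr0.
  - move=> c d x y hx hy ex ey v.
    have key : forall e w, sl_hom T2 e w -> sl_br T (g1 (sl_br T1 x y)) (g2 w) = 0.
      move=> e w hw; rewrite bg1.
      have z0 := jac0 HTL (pg1 _ _ hx) (pg1 _ _ hy) (pg2 _ _ hw) (ex w) (ey w).
      by rewrite (br_skew HTL (br_hom HTL (pg1 _ _ hx) (pg1 _ _ hy)) (pg2 _ _ hw)) z0 scaler0 oppr0.
    have [v0 [v1 [h0 h1 ->]]] := decomp HT2L v.
    by rewrite (linD lg2) (brDr HTL) (key _ _ h0) (key _ _ h1) addr0.
have cross : forall (u : T1) (v : T2), sl_br T (g2 v) (g1 u) = 0.
  move=> u v.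
  have [u0 [u1 [hu0 hu1 ->]]] := decomp HT1L u.
  have [v0 [v1 [hv0 hv1 ->]]] := decomp HT2L v.
  have key : forall e e' (x : T1) (y : T2), sl_hom T1 e x -> sl_hom T2 e' y -> sl_br T (g2 y) (g1 x) = 0.
    move=> e e' x y hx hy.
    by rewrite (br_skew HTL (pg2 _ _ hy) (pg1 _ _ hx)) stage2 scaler0 oppr0.
  rewrite (linD lg1) (linD lg2) !(brDl HTL, brDr HTL).
  by rewrite (key _ _ _ _ hu0 hv0) (key _ _ _ _ hu1 hv0) (key _ _ _ _ hu0 hv1) (key _ _ _ _ hu1 hv1) !addr0.
pose g := fun p : S12 => g1 p.1 + g2 p.2.
have hg : is_sLie_hom g.
  split.
  - move=> k x y; rewrite /g /= lg1 lg2 scalerDr.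
    by rewrite addrACA.
  - move=> b x [h1 h2]; rewrite /g; exact (homD HTL (pg1 _ _ h1) (pg2 _ _ h2)).
  - move=> x y; rewrite /g /= bg1 bg2 !(brDl HTL, brDr HTL) stage2 cross add0r addr0.
    done.
have e1 : forall x, f (g1 x) = (x, 0).
  apply: (tensor_uniq HT1 HS (comp_hom hg1 hf) (inl_hom _ HT2L)) => a b l n hl hn /=.
  rewrite (ft1 _ _ _ _ hl hn) (ft _ _ _ _ (homP1 hl) hn) /tp /=.
  by rewrite (t0l HM HT2 hn).
have e2 : forall x, f (g2 x) = (0, x).
  apply: (tensor_uniq HT2 HS (comp_hom hg2 hf) (inr_hom _ HT1L)) => a b m n hm hn /=.
  rewrite (ft2 _ _ _ _ hm hn) (ft _ _ _ _ (homP2 hm) hn) /tp /=.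
  by rewrite (t0l HL HT1 hn).
have e3 : forall x, g (f x) = x.
  apply: (tensor_uniq HT HTL (comp_hom hf hg) (id_hom T)) => a b [l m] n [hl hm] hn /=.
  rewrite (ft _ _ _ _ (conj hl hm) hn) /tp /g /= (ft1 _ _ _ _ hl hn) (ft2 _ _ _ _ hm hn).
  rewrite -(t_Dl Hr (homP1 hl) (homP2 hm) hn).
  by congr (t _ n); apply: pairE; rewrite /= ?addr0 ?add0r.
exists f; split.
  split => //; exists g => // [[x1 x2]].
  rewrite /g /= (linD lf) e1 e2.
  by apply: pairE; rewrite /= ?addr0 ?add0r.
move=> a b l m n hl hm hn.
exact (ft _ _ _ _ (conj hl hm : sl_hom P a ((l, m) : P)) hn).
Qed.

End Main.

Theorem mainTheorem9 (F : fieldType)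
  (char2 : (2%:R : F) != 0) (char3 : (3%:R : F) != 0)
  (L M N : sLie F) (HL : is_sLie L) (HM : is_sLie M) (HN : is_sLie N)
  (actLN : L -> N -> N) (actNL : N -> L -> L)
  (actMN : M -> N -> N) (actNM : N -> M -> M)
  (aLN : is_action actLN) (aNL : is_action actNL)
  (aMN : is_action actMN) (aNM : is_action actNM)
  (* (i) *)
  (cLN : compatible actLN actNL) (cMN : compatible actMN actNM)
  (* (ii) *)
  (hii : forall a b c (l : L) (m : M) (n : N),
      sl_hom L a l -> sl_hom M b m -> sl_hom N c n ->
      actLN l (actMN m n) = sgn F a b *: actMN m (actLN l n))
  (* (iii) : N (x) M and N (x) L, and the triviality of the canonical maps *)
  (TNM : sLie F) (tNM : N -> M -> TNM) (HTNM : is_tensor actNM actMN tNM)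
  (TNL : sLie F) (tNL : N -> L -> TNL) (HTNL : is_tensor actNL actLN tNL)
  (hiii1 : forall a b (x : N) (m : M), act_span actLN x ->
      sl_hom N a x -> sl_hom M b m -> tNM x m = 0)
  (hiii2 : forall a b (x : N) (l : L), act_span actMN x ->
      sl_hom N a x -> sl_hom L b l -> tNL x l = 0) :
  is_action (sum_act_l actLN actMN) /\
  is_action (sum_act_r actNL actNM) /\
  forall (T : sLie F) (t : sLie_sum L M -> N -> T)
         (T1 : sLie F) (t1 : L -> N -> T1)
         (T2 : sLie F) (t2 : M -> N -> T2),
    is_tensor (sum_act_l actLN actMN) (sum_act_r actNL actNM) t ->
    is_tensor actLN actNL t1 ->
    is_tensor actMN actNM t2 ->
    exists f : T -> sLie_sum T1 T2,
      is_sLie_iso f /\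
      forall a b (l : L) (m : M) (n : N),
        sl_hom L a l -> sl_hom M a m -> sl_hom N b n ->
        f (t (l, m) n) = (t1 l n, t2 m n).
Proof.
split; first exact (sumL_action HN aLN aMN hii).
split; first exact (sumR_action aNL aNM).
move=> T t T1 t1 T2 t2 HT HT1 HT2.
exact (main_iso HL HM HN aLN aNL aMN aNM HTNM HTNL hiii1 hiii2 HT1 HT2 HT).
Qed.
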